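(* Let $V$ be a countable set, $\Lambda\subseteq\mathbb N_0$, and let $E$ be the set of unordered pairs $\{i,j\}$ of distinct elements of $V$ (edges of the complete graph on $V$). Consider a configuration process with generator $\mathcal L=\sum_{\{i,j\}\in E}\mathcal L_{i,j}$, where $$\mathcal L_{i,j}f(\eta)=c_{i,j}(\eta_i,\eta_j)[f(\eta^{i,j})-f(\eta)]+c_{j,i}(\eta_j,\eta_i)[f(\eta^{j,i})-f(\eta)],$$ with $\eta^{i,j}:=\eta-\delta_i+\delta_j$ and rate functions $c_{i,j}:\Lambda\times\Lambda\to\mathbb R$. Then $[\mathcal L_{i,j},\mathcal A]=0$ for all $\{i,j\}\in E$ if and only if there exist $\theta:E\to\mathbb R$ and $\alpha:V^2\to\mathbb R$ such that $$c_{i,j}(\kappa,m)=\kappa\big(\theta(\{i,j\})\,m+\alpha(i,j)\big)\qquad\text{for all } i\neq j,\ \kappa,m\in\Lambda.$$ As a consequence, the configuration process with rates of this form is consistent, i.e. $[\mathcal L,\mathcal A]=0$.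
   Context: Configurations are $\eta\in\Lambda^V$ with finitely many particles; $\delta_z$ is the configuration with a single particle at $z$. The annihilation operator acts on functions $f$ of configurations by $\mathcal Af(\eta)=\sum_{x\in V}a_xf(\eta)$, $a_xf(\eta)=\eta_xf(\eta-\delta_x)$ if $\eta_x\ge1$ and $0$ if $\eta_x=0$. $[\cdot,\cdot]$ is the commutator. *)

(* Defs.v *)
From mathcomp Require Import all_boot all_order all_algebra.
From mathcomp Require Import boolp classical_sets functions cardinality fsbigop reals.
Set Implicit Arguments. Unset Strict Implicit. Unset Printing Implicit Defensive.
Import Order.TTheory GRing.Theory Num.Theory.
Local Open Scope ring_scope.

(* The state space of the process is the
   set of finitely supported configurations with values in Lambda (see
   [in_state_space]); test functions f are defined on all of V -> int so
   that expressions like f(eta - delta_i + delta_j) always make sense. *)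
Definition config (V : Type) := V -> int.

Definition delta (V : eqType) (z : V) : config V := fun y => (y == z)%:Z.

Definition jump (V : eqType) (eta : config V) (i j : V) : config V :=
  fun y => eta y - delta i y + delta j y.

Definition remove1 (V : eqType) (eta : config V) (x : V) : config V :=
  fun y => eta y - delta x y.

Definition finite_config (V : Type) (eta : config V) : Prop :=
  finite_set [set x | eta x != 0].

Definition in_state_space (V : Type) (Lam : pred nat) (eta : config V) : Prop :=
  finite_config eta /\ (forall x, 0 <= eta x /\ Lam `|eta x|%N).

Definition annihilation (R : realType) (V : countType)
  (f : config V -> R) (eta : config V) : R :=
  \sum_(x \in [set: V]) (eta x)%:~R * f (remove1 eta x).

(* Edge generator L_{i,j} with rate functions c i j : nat -> nat -> R
   (only values on Lambda x Lambda are ever used). *)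
Definition gen_edge (R : realType) (V : countType)
  (c : V -> V -> nat -> nat -> R) (i j : V)
  (f : config V -> R) (eta : config V) : R :=
  c i j `|eta i|%N `|eta j|%N * (f (jump eta i j) - f eta)
  + c j i `|eta j|%N `|eta i|%N * (f (jump eta j i) - f eta).

Definition commutator (R : realType) (V : Type)
  (P Q : (config V -> R) -> config V -> R)
  (f : config V -> R) (eta : config V) : R :=
  P (Q f) eta - Q (P f) eta.

Definition commutes_edge (R : realType) (V : countType) (Lam : pred nat)
  (c : V -> V -> nat -> nat -> R) (i j : V) : Prop :=
  forall (f : config V -> R) (eta : config V), in_state_space Lam eta ->
    commutator (gen_edge c i j) (@annihilation R V) f eta = 0.

(* Main.v *)
Require Import Defs.
From mathcomp Require Import all_boot all_order all_algebra.
From mathcomp Require Import boolp classical_sets functions cardinality fsbigop reals.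
From mathcomp Require Import ring zify.
Import GRing.Theory Num.Theory.
Local Open Scope ring_scope.

Section S.
Variables (R : realType) (V : countType).

Lemma sumT_seq (F : V -> R) (r : seq V) : uniq r ->
  (forall x, x \notin r -> F x = 0) ->
  \sum_(x \in [set: V]) F x = \sum_(x <- r) F x.
Proof.
move=> ur H; rewrite (fsbigE r) //; last by move=> x _; exact: H.
by apply: eq_bigl => x; rewrite in_setT.
Qed.

Lemma remove_jump (eta : config V) k l x :
  remove1 (jump eta k l) x = jump (remove1 eta x) k l.
Proof. by apply/funext => y; rewrite /remove1 /jump; ring. Qed.

Lemma remove_jump2 (eta : config V) k l :
  remove1 (jump eta k l) l = remove1 eta k.
Proof. by apply/funext => y; rewrite /remove1 /jump; ring. Qed.

Lemma jump_remove (eta : config V) k l :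
  jump (remove1 eta k) l k = remove1 eta l.
Proof. by apply/funext => y; rewrite /remove1 /jump; ring. Qed.

Lemma absm1 (a : nat) : a = 0%N \/ `|a%:Z - 1|%N = a.-1.
Proof. case: a => [|a]; first by left. by right; rewrite -addn1 PoszD addrK addn1. Qed.

Lemma comm_formula (c : V -> V -> nat -> nat -> R) (f : config V -> R)
  (eta : config V) i j (a b : nat) :
 i != j -> finite_config eta -> eta i = a%:Z -> eta j = b%:Z ->
 commutator (gen_edge c i j) (@annihilation R V) f eta =
   c i j a b * ((a%:R - 1) * f (jump (remove1 eta i) i j)
        + (b%:R + 1 - a%:R) * f (remove1 eta i) - b%:R * f (remove1 eta j))
 + c j i b a * ((b%:R - 1) * f (jump (remove1 eta j) j i)
        + (a%:R + 1 - b%:R) * f (remove1 eta j) - a%:R * f (remove1 eta i))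
 - a%:R * (c i j a.-1 b * (f (jump (remove1 eta i) i j) - f (remove1 eta i))
           + c j i b a.-1 * (f (remove1 eta j) - f (remove1 eta i)))
 - b%:R * (c i j a b.-1 * (f (remove1 eta i) - f (remove1 eta j))
           + c j i b.-1 a * (f (jump (remove1 eta j) j i) - f (remove1 eta j))).
Proof.
move=> ij fin ea eb.
have [s hs] := (finite_seqP _).1 fin.
pose r := undup [:: i, j & s].
have ur : uniq r := undup_uniq _.
have ir : i \in r by rewrite mem_undup inE eqxx.
have jr : j \in r by rewrite mem_undup !inE eqxx orbT.
have nr : forall x, x \notin r -> [/\ x != i, x != j & eta x = 0].
  move=> x; rewrite mem_undup !inE negb_or negb_or => /and3P[xi xj xs].
  split=> //; apply/eqP; apply: contraNT xs => h.
  have : [set y | eta y != 0]%classic x by [].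
  by rewrite hs.
have dij : delta i j = 0 by rewrite /delta eq_sym (negbTE ij).
have dji : delta j i = 0 by rewrite /delta (negbTE ij).
have dii : delta i i = 1 by rewrite /delta eqxx.
have djj : delta j j = 1 by rewrite /delta eqxx.
have dx : forall x y : V, x != y -> delta y x = 0.
  move=> x y h; rewrite /delta. by rewrite (negbTE h).
rewrite /commutator /gen_edge /annihilation.
rewrite !(@sumT_seq _ r ur); try by move=> x /nr[xi xj ex]; rewrite ?/jump ?ex ?dx // ?subr0 ?addr0 mul0r.
rewrite -!sumrB !mulr_sumr -!big_split -sumrB /=.
rewrite (big_rem i) //= (big_rem j) /=; last by rewrite mem_rem_uniq // inE eq_sym ij.
rewrite big1_seq ?addr0; last first.
  move=> x /andP[_]; rewrite mem_rem_uniq ?rem_uniq // inE => /andP[xj].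
  rewrite mem_rem_uniq // inE => /andP[xi _].
  have jx : jump eta i j x = eta x by rewrite /jump !dx // subr0 addr0.
  have jx' : jump eta j i x = eta x by rewrite /jump !dx // subr0 addr0.
  have rxi : remove1 eta x i = eta i by rewrite /remove1 dx 1?eq_sym // subr0.
  have rxj : remove1 eta x j = eta j by rewrite /remove1 dx 1?eq_sym // subr0.
  rewrite jx jx' !remove_jump rxi rxj; ring.
have j1 : jump eta i j i = a%:Z - 1 by rewrite /jump dii dji ea addr0.
have j2 : jump eta j i i = a%:Z + 1 by rewrite /jump dji dii ea subr0.
have j3 : jump eta i j j = b%:Z + 1 by rewrite /jump dij djj eb subr0.
have j4 : jump eta j i j = b%:Z - 1 by rewrite /jump djj dij eb addr0.
have r1 : remove1 eta i i = a%:Z - 1 by rewrite /remove1 dii ea.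
have r2 : remove1 eta i j = b%:Z by rewrite /remove1 dij eb subr0.
have r3 : remove1 eta j i = a%:Z by rewrite /remove1 dji ea subr0.
have r4 : remove1 eta j j = b%:Z - 1 by rewrite /remove1 djj eb.
rewrite j1 j2 j3 j4 r1 r2 r3 r4 !remove_jump2 !remove_jump !jump_remove ea eb /=.
case: (absm1 a) => [a0|->]; case: (absm1 b) => [b0|->]; rewrite ?a0 ?b0; ring.
Qed.

Definition ind (P : config V) (z : config V) : R := if `[< z = P >] then 1 else 0.

Lemma indT P : ind P P = 1. Proof. by rewrite /ind asboolT. Qed.
Lemma indF P Q (i : V) : Q i != P i -> ind P Q = 0.
Proof. move=> h; rewrite /ind asboolF // => e; by rewrite e eqxx in h. Qed.

Definition eta2 (i j : V) (a b : nat) : config V :=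
  fun y => if y == i then a%:Z else if y == j then b%:Z else 0.

Lemma eta2_state (Lam : pred nat) i j a b : i != j -> Lam 0 -> Lam a -> Lam b ->
  in_state_space Lam (eta2 i j a b).
Proof.
move=> ij L0 La Lb; split.
  apply: (@sub_finite_set _ _ [set` [:: i; j]]); last by apply/finite_seqP; exists [:: i; j].
  move=> y /=; rewrite /eta2 !inE.
  by case: (y == i); case: (y == j); rewrite ?orbT ?eqxx.
move=> x; rewrite /eta2; case: (x == i) => //; case: (x == j) => //.
Qed.

End S.
Arguments eta2 {V}. Arguments ind {R V}. Arguments comm_formula {R V}.
Arguments indT {R V}. Arguments indF {R V}. Arguments eta2_state {V}.
Arguments remove_jump {V}. Arguments remove_jump2 {V}. Arguments jump_remove {V}.

Lemma down (Lam : pred nat) (HLam : forall k : nat, Lam k.+1 -> Lam k) k m :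
  Lam k -> (m <= k)%N -> Lam m.
Proof.
elim: k => [|k IH] Lk; first by rewrite leqn0 => /eqP ->.
by rewrite leq_eqVlt => /orP[/eqP -> // | ]; rewrite ltnS; apply: IH; apply: HLam.
Qed.
Arguments down {Lam} HLam {k m}.

Theorem theorem3p3 (R : realType) (V : countType) (Lam : pred nat)
  (HLam : forall k : nat, Lam k.+1 -> Lam k)
  (c : V -> V -> nat -> nat -> R) :
  (forall i j : V, i != j -> commutes_edge Lam c i j) <->
  (exists (theta : V -> V -> R) (alpha : V -> V -> R),
     (forall i j : V, theta i j = theta j i) /\
     (forall i j : V, i != j -> forall k m : nat, Lam k -> Lam m ->
        c i j k m = k%:R * (theta i j * m%:R + alpha i j))).
Proof.
split.
- move=> H.
  have E12 : forall i j, i != j -> forall a b, Lam a -> Lam b ->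
      c i j a b * (a%:R - 1) - a%:R * c i j a.-1 b = 0 /\
      c i j a b * (b%:R + 1 - a%:R) - a%:R * c j i b a + a%:R * c i j a.-1 b
        + a%:R * c j i b a.-1 - b%:R * c i j a b.-1 = 0.
    move=> i j ij a b La Lb.
    have L0 : Lam 0 by exact: (down HLam La (leq0n _)).
    have st := @eta2_state V Lam i j a b ij L0 La Lb.
    have ea : eta2 i j a b i = a%:Z by rewrite /eta2 eqxx.
    have eb : eta2 i j a b j = b%:Z by rewrite /eta2 eq_sym (negbTE ij) eqxx.
    have fin := st.1.
    have dij : delta i j = 0 by rewrite /delta eq_sym (negbTE ij).
    have dji : delta j i = 0 by rewrite /delta (negbTE ij).
    have dii : delta i i = 1 by rewrite /delta eqxx.
    set e := eta2 i j a b in ea eb fin st *.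
    have v1 : jump (remove1 e i) i j i = a%:Z - 1 - 1 by rewrite /jump /remove1 dii dji ea addr0.
    have v2 : remove1 e i i = a%:Z - 1 by rewrite /remove1 dii ea.
    have v3 : remove1 e j i = a%:Z by rewrite /remove1 dji ea subr0.
    have v4 : jump (remove1 e j) j i i = a%:Z + 1 by rewrite /jump /remove1 dii dji ea !subr0.
    split.
    + have := H i j ij (ind (jump (remove1 e i) i j)) e st.
      rewrite (comm_formula c _ _ _ _ _ _ ij fin ea eb) indT.
      rewrite (@indF _ _ _ _ i) ?v1 ?v2; last by apply/eqP; lia.
      rewrite (@indF _ _ _ (remove1 e j) i) ?v1 ?v3; last by apply/eqP; lia.
      rewrite (@indF _ _ _ _ i) ?v1 ?v4; last by apply/eqP; lia.
      move=> h; apply: etrans h; ring.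
    + have := H i j ij (ind (remove1 e i)) e st.
      rewrite (comm_formula c _ _ _ _ _ _ ij fin ea eb) indT.
      rewrite (@indF _ _ _ (jump (remove1 e i) i j) i) ?v1 ?v2; last by apply/eqP; lia.
      rewrite (@indF _ _ _ (remove1 e j) i) ?v2 ?v3; last by apply/eqP; lia.
      rewrite (@indF _ _ _ (jump (remove1 e j) j i) i) ?v2 ?v4; last by apply/eqP; lia.
      move=> h; apply: etrans h; ring.
  have C0 : forall i j, i != j -> forall b, Lam b -> c i j 0 b = 0.
    move=> i j ij b Lb; have L0 : Lam 0 := down HLam Lb (leq0n _).
    have [h _] := E12 i j ij 0%N b L0 Lb.
    by move: h; rewrite /= mul0r subr0 add0r mulrN1 => /eqP; rewrite oppr_eq0 => /eqP.
  have Clin : forall i j, i != j -> forall k m, Lam k -> Lam m ->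
      c i j k m = k%:R * c i j 1 m.
    move=> i j ij; elim=> [|k IH] m Lk Lm; first by rewrite C0 // mul0r.
    case: k IH Lk => [|k] IH Lk; first by rewrite mul1r.
    have [h _] := E12 i j ij k.+2 m Lk Lm.
    have Lk1 := HLam _ Lk.
    apply: (@mulIf _ (k.+1%:R)); first by rewrite pnatr_eq0.
    move: h; rewrite /= (IH m Lk1 Lm) => /eqP; rewrite subr_eq0 => /eqP h.
    have -> : c i j k.+2 m * k.+1%:R = c i j k.+2 m * (k.+2%:R - 1) by ring.
    rewrite h /=; ring.
  have Diff : forall i j, i != j -> forall m, Lam m.+1 ->
      c i j 1 m.+1 - c i j 1 m = c j i 1 1 - c j i 1 0.
    move=> i j ij m Lm.
    have L1 : Lam 1 := down HLam Lm (ltn0Sn _).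
    have Lm' := HLam _ Lm.
    have [_ h] := E12 i j ij 1%N m.+1 L1 Lm.
    have ji : j != i by rewrite eq_sym.
    move: h; rewrite /= C0 // (Clin j i ji m.+1 1%N Lm L1) (Clin j i ji m.+1 0%N Lm (down HLam L1 (leq0n _))).
    move=> h.
    apply: (@mulIf _ (m.+1%:R)); first by rewrite pnatr_eq0.
    apply/eqP; rewrite -subr_eq0; apply/eqP; apply: etrans h.
    rewrite -!natr1; ring.
  have Sym : forall i j, i != j -> Lam 1 ->
      c i j 1 1 - c i j 1 0 = c j i 1 1 - c j i 1 0.
    by move=> i j ij L1; apply: Diff.
  have Aff : forall i j, i != j -> Lam 1 -> forall m, Lam m ->
      c i j 1 m = (c i j 1 1 - c i j 1 0) * m%:R + c i j 1 0.
    move=> i j ij L1; elim=> [|m IH] Lm; first by rewrite mulr0 add0r.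
    have Lm' := HLam _ Lm.
    have := Diff i j ij m Lm; rewrite -(Sym i j ij L1) (IH Lm') => h.
    move/eqP: h; rewrite subr_eq => /eqP ->; ring.
  exists (fun i j => if Lam 1 then c i j 1 1 - c i j 1 0 else 0).
  exists (fun i j => c i j 1 0).
  split.
    move=> i j; case L1: (Lam 1) => //; case: (eqVneq i j) => [-> // | ij].
    exact: Sym i j ij L1.
  move=> i j ij k m Lk Lm; rewrite (Clin i j ij k m Lk Lm).
  case: k Lk => [|k] Lk; first by rewrite !mul0r.
  have L1 : Lam 1 := down HLam Lk (ltn0Sn _).
  by rewrite L1 (Aff i j ij L1 m Lm).
- move=> [th [al [thS Hc]]] i j ij f eta [fin pos].
  have ji : j != i by rewrite eq_sym.
  have [ea0 La] := pos i; have [eb0 Lb] := pos j.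
  have ea : eta i = (`|eta i|%N)%:Z by rewrite gez0_abs.
  have eb : eta j = (`|eta j|%N)%:Z by rewrite gez0_abs.
  move: (`|eta i|%N) (`|eta j|%N) ea eb La Lb => a b ea eb La Lb.
  rewrite (comm_formula c f eta i j a b ij fin ea eb).
  case: a La ea => [|a] La ea; case: b Lb eb => [|b] Lb eb /=.
  + rewrite (Hc i j ij _ _ La Lb) (Hc j i ji _ _ Lb La); ring.
  + rewrite (Hc i j ij _ _ La Lb) (Hc j i ji _ _ Lb La).
    rewrite (Hc i j ij _ _ La (HLam _ Lb)) (Hc j i ji _ _ (HLam _ Lb) La) ?(thS j i); ring.
  + rewrite (Hc i j ij _ _ La Lb) (Hc j i ji _ _ Lb La).
    rewrite (Hc i j ij _ _ (HLam _ La) Lb) (Hc j i ji _ _ Lb (HLam _ La)) ?(thS j i); ring.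
  + rewrite (Hc i j ij _ _ La Lb) (Hc j i ji _ _ Lb La).
    rewrite (Hc i j ij _ _ (HLam _ La) Lb) (Hc j i ji _ _ Lb (HLam _ La)).
    rewrite (Hc i j ij _ _ La (HLam _ Lb)) (Hc j i ji _ _ (HLam _ Lb) La) ?(thS j i); ring.
Qed.
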